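(* Let $\Lambda$ be an artin algebra and $Y$ a (finite length) $\Lambda$-module. Then the poset $[\to Y\rangle$ is a modular lattice.
   Context: All modules are finite length left $\Lambda$-modules. For maps $f: X\to Y$, $f': X'\to Y$ ending in $Y$, write $f\preceq f'$ if there is $h: X\to X'$ with $f=f'h$. The maps $f,f'$ are right equivalent if $f\preceq f'$ and $f'\preceq f$; the right equivalence class of $f$ is $[f\rangle$. $[\to Y\rangle$ denotes the set of right equivalence classes of maps ending in $Y$, partially ordered by $[f\rangle\le[f'\rangle$ iff $f\preceq f'$. (In this poset the meet of $[f_1\rangle,[f_2\rangle$ is given by the composite of a pullback of $f_1,f_2$ with $f_1$, and the join by $[f_1,f_2]: X_1\oplus X_2\to Y$.) *)

(* Defs.v *)
From HB Require Import structures.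
From mathcomp Require Import all_boot all_order all_algebra.
Set Implicit Arguments. Unset Strict Implicit. Unset Printing Implicit Defensive.
Import GRing.Theory.
Local Open Scope ring_scope.

Definition is_ideal (k : comNzRingType) (I : k -> Prop) : Prop :=
  [/\ I 0, (forall a b, I a -> I b -> I (a + b)) & (forall r a, I a -> I (r * a))].

Definition artinian_ring (k : comNzRingType) : Prop :=
  forall I : nat -> (k -> Prop),
    (forall n, is_ideal (I n)) ->
    (forall n x, I n.+1 x -> I n x) ->
    exists N, forall n, (N <= n)%N -> forall x, I n x <-> I N x.

Definition artin_algebra (k : comNzRingType) (L : nzRingType)
  (phi : {rmorphism k -> L}) : Prop :=
  [/\ artinian_ring k,
      (forall c x, phi c * x = x * phi c) &
      exists s : seq L, forall x : L,
        exists c : seq k, x = \sum_(i < size s) phi (nth 0 c i) * nth 0 s i].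

Definition is_submodule (L : nzRingType) (X : lmodType L) (M : X -> Prop) : Prop :=
  [/\ M 0, (forall u v, M u -> M v -> M (u + v)) & (forall (a : L) u, M u -> M (a *: u))].

Definition finite_length (L : nzRingType) (X : lmodType L) : Prop :=
  exists n : nat, forall (m : nat) (M : nat -> (X -> Prop)),
    (forall i, is_submodule (M i)) ->
    (forall i, (i < m)%N ->
       (forall x, M i x -> M i.+1 x) /\ exists x, M i.+1 x /\ ~ M i x) ->
    (m <= n)%N.

Record FLMod (L : nzRingType) := {
  fl_carrier :> lmodType L;
  fl_finite : finite_length fl_carrier }.

Definition map_to (L : nzRingType) (Y : lmodType L) : Type :=
  { X : FLMod L & {linear X -> Y} }.

Definition map_le (L : nzRingType) (Y : lmodType L) (f f' : map_to Y) : Prop :=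
  exists h : {linear (projT1 f) -> (projT1 f')},
    forall x, projT2 f x = projT2 f' (h x).

(* Order-theoretic notions on a preordered type; they are invariant under the
   equivalence a ~ b <-> le a b /\ le b a, so they describe the poset of classes. *)
Definition is_lub (T : Type) (le : T -> T -> Prop) (a b j : T) : Prop :=
  [/\ le a j, le b j & forall z, le a z -> le b z -> le j z].
Definition is_glb (T : Type) (le : T -> T -> Prop) (a b m : T) : Prop :=
  [/\ le m a, le m b & forall z, le z a -> le z b -> le z m].

(* The poset of equivalence classes of (T, le) is a modular lattice:
   all binary joins and meets exist, and for a <= c,
   (a v b) ^ c <= a v (b ^ c)  (the reverse inequality holds in any lattice). *)
Definition modular_lattice_classes (T : Type) (le : T -> T -> Prop) : Prop :=
  [/\ (forall a b, exists j, is_lub le a b j),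
      (forall a b, exists m, is_glb le a b m) &
      (forall a b c j m m' j', le a c ->
          is_lub le a b j -> is_glb le j c m ->
          is_glb le b c m' -> is_lub le a m' j' -> le m j')].

(* Main.v *)
From HB Require Import structures.
Require Import Defs.
From mathcomp Require Import all_boot all_order all_algebra.
From Stdlib Require Import Classical.
Set Implicit Arguments. Unset Strict Implicit. Unset Printing Implicit Defensive.
Import GRing.Theory.
Local Open Scope ring_scope.

Lemma fl_inj (L : nzRingType) (S T : lmodType L) (g : {linear S -> T})
  (ginj : injective g) : finite_length T -> finite_length S.
Proof.
move=> [n Hn]; exists n => m M HM Hch.
apply: (Hn m (fun i z => exists s, g s = z /\ M i s)).
- move=> i; have [H0 HD HZ] := HM i; split.
  + by exists 0; rewrite linear0.
  + move=> u v [s [<- Hs]] [t [<- Ht]]; exists (s + t); split; [exact: linearD | exact: HD].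
  + move=> a u [s [<- Hs]]; exists (a *: s); split; [exact: linearZ | exact: HZ].
- move=> i lti; have [Hinc [x [Hx Hnx]]] := Hch i lti; split.
  + by move=> z [s [<- Hs]]; exists s; split => //; exact: Hinc.
  + exists (g x); split; first by exists x.
    by move=> [s [/ginj -> Hs]].
Qed.

Definition schain (L : nzRingType) (X : lmodType L) (M : nat -> X -> Prop) (s : nat) :=
  (forall i, is_submodule (M i)) /\
  (forall i, (i < s)%N -> (forall x, M i x -> M i.+1 x) /\ exists x, M i.+1 x /\ ~ M i x).

Lemma ext_strict (L : nzRingType) (X : lmodType L) (M : nat -> X -> Prop) s (N' : X -> Prop) :
  schain M s -> is_submodule N' -> (forall x, M s x -> N' x) -> (exists x, N' x /\ ~ M s x) ->
  exists M', schain M' s.+1 /\ forall x, M' s.+1 x <-> N' x.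
Proof.
move=> [HM Hch] HN' Hinc Hst.
exists (fun i => if (i <= s)%N then M i else N'); split; last by rewrite ltnn.
split; first by move=> i; case: ifP.
move=> i; rewrite ltnS => lei.
case: (ltnP i s) => [lti|gei].
- by rewrite (ltnW lti); exact: Hch.
- have e : i = s by apply/eqP; rewrite eqn_leq lei gei.
  by subst; rewrite lei.
Qed.

Lemma step_chain (L : nzRingType) (X : lmodType L) (C : nat -> X -> Prop) s (N N' : X -> Prop) :
  schain C s -> (forall x, C s x <-> N x) -> is_submodule N' -> (forall x, N x -> N' x) ->
  exists t C', [/\ schain C' t, (forall x, C' t x <-> N' x), (s <= t)%N &
     ((exists x, N' x /\ ~ N x) -> (s < t)%N)].
Proof.
move=> hC eC hN' inc.
case: (classic (exists x, N' x /\ ~ N x)) => [st|nst].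
- have [C' [hC' eC']] := ext_strict hC hN' (fun x h => inc x ((proj1 (eC x)) h))
     (let: ex_intro x (conj a b) := st in ex_intro _ x (conj a (fun h => b ((proj1 (eC x)) h)))).
  by exists s.+1, C'; split.
- exists s, C; split => //; try by move=> h; case: (nst h).
  move=> x; split; first by move=> /eC; exact: inc.
  move=> hx; apply/eC; apply: NNPP => hn; apply: nst; by exists x.
Qed.

Lemma fl_prod (L : nzRingType) (X1 X2 : lmodType L) :
  finite_length X1 -> finite_length X2 -> finite_length (X1 * X2)%type.
Proof.
move=> [n1 H1] [n2 H2]; exists (n1 + n2)%N => m M HM Hch.
pose K i (x : X1) := M i (x, 0 : X2).
pose P i (y : X2) := exists x : X1, M i (x, y).
have subK : forall i, is_submodule (K i).
  move=> i; have [H0 HD HZ] := HM i; split.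
  + exact: H0.
  + move=> u v Hu Hv; have := HD _ _ Hu Hv; rewrite /K.
    by congr (M i _); congr pair; rewrite /= addr0.
  + move=> a u Hu; have := HZ a _ Hu; rewrite /K.
    by congr (M i _); congr pair; rewrite /= scaler0.
have subP : forall i, is_submodule (P i).
  move=> i; have [H0 HD HZ] := HM i; split.
  + by exists 0.
  + by move=> u v [x Hu] [y Hv]; exists (x + y); exact: (HD _ _ Hu Hv).
  + by move=> a u [x Hu]; exists (a *: x); exact: (HZ a _ Hu).
have main : forall j, (j <= m)%N -> exists s1 s2, (j <= s1 + s2)%N /\
   (exists C1, schain C1 s1 /\ forall x, C1 s1 x <-> K j x) /\
   (exists C2, schain C2 s2 /\ forall x, C2 s2 x <-> P j x).
  elim=> [_|j IH ltjm].
  - exists 0%N, 0%N; split => //; split.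
    + by exists (fun _ => K 0%N); split => //; split.
    + by exists (fun _ => P 0%N); split => //; split.
  - have [s1 [s2 [Hj [[C1 [hC1 eC1]] [C2 [hC2 eC2]]]]]] := IH (ltnW ltjm).
    have [Hinc [z [Hz Hnz]]] := Hch j ltjm.
    have incK' : forall x, K j x -> K j.+1 x by move=> x Hx; exact: Hinc.
    have incP' : forall x, P j x -> P j.+1 x.
      by move=> x [y Hy]; exists y; exact: Hinc.
    have [t1 [D1 [hD1 eD1 le1 st1]]] := step_chain hC1 eC1 (subK j.+1) incK'.
    have [t2 [D2 [hD2 eD2 le2 st2]]] := step_chain hC2 eC2 (subP j.+1) incP'.
    exists t1, t2; split; last by split; [exists D1 | exists D2].
    case: (classic (exists x, K j.+1 x /\ ~ K j x)) => [sK|nsK].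
      by have := st1 sK; rewrite -(leq_add2r t2) => /(leq_trans _)-> //; rewrite addSn ltnS (leq_trans Hj) // leq_add2l.
    case: (classic (exists x, P j.+1 x /\ ~ P j x)) => [sP|nsP].
      by have := st2 sP; rewrite -(leq_add2l t1) => /(leq_trans _)-> //; rewrite addnS ltnS (leq_trans Hj) // leq_add2r.
    exfalso; case: z Hz Hnz => z1 z2 Hz Hnz.
    have [y1 Hy1] : P j z2.
      by apply: NNPP => h; apply: nsP; exists z2; split => //; exists z1.
    have Hy1' := Hinc _ Hy1.
    have [_ HD HZ] := HM j.+1.
    have Kd : K j.+1 (z1 - y1).
      have := HD _ _ Hz (HZ (-1) _ Hy1'); rewrite /K.
      by congr (M _ _); congr pair; rewrite /= scaleN1r ?subrr.
    have Kd' : K j (z1 - y1) by apply: NNPP => h; apply: nsK; exists (z1 - y1).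
    have [_ HD' _] := HM j.
    apply: Hnz; have := HD' _ _ Kd' Hy1.
    by congr (M _ _); congr pair; rewrite /= ?subrK ?add0r.
have [s1 [s2 [Hm [[C1 [hC1 _]] [C2 [hC2 _]]]]]] := main m (leqnn m).
apply: (leq_trans Hm); apply: leq_add.
- exact: (H1 s1 C1 (proj1 hC1) (proj2 hC1)).
- exact: (H2 s2 C2 (proj1 hC2) (proj2 hC2)).
Qed.

Definition mk_lin (L : nzRingType) (U V : lmodType L) (f : U -> V) (H : linear f) : {linear U -> V} :=
  HB.pack f (GRing.isLinear.Build L U V *:%R f H).
Lemma mk_linE (L : nzRingType) (U V : lmodType L) (f : U -> V) (H : linear f) x : mk_lin H x = f x.
Proof. by []. Qed.
Section PB.
Variables (L : nzRingType) (X1 X2 Y : lmodType L) (f1 : {linear X1 -> Y}) (f2 : {linear X2 -> Y}).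
Definition pbpred : {pred (X1 * X2)%type} := fun z => f1 z.1 == f2 z.2.
Lemma pb_closed : submod_closed pbpred.
Proof.
split; first by rewrite /pbpred /in_mem /= !linear0.
move=> a u v; rewrite /pbpred /in_mem /= => /eqP e1 /eqP e2.
by rewrite !linearP e1 e2.
Qed.
HB.instance Definition _ := GRing.isSubmodClosed.Build L (X1*X2)%type pbpred pb_closed.
Definition pbT := {z : (X1 * X2)%type | z \in pbpred}.
HB.instance Definition _ := [SubChoice_isSubLmodule of {z : (X1 * X2)%type | z \in pbpred} by <:].
End PB.

Section Constr.
Variables (L : nzRingType) (Y : lmodType L).

Lemma val_linear (f g : map_to Y) : linear (val : pbT (projT2 f) (projT2 g) -> _).
Proof. by move=> a u v; rewrite linearP. Qed.

Lemma val_inj' (f g : map_to Y) : injective (val : pbT (projT2 f) (projT2 g) -> _).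
Proof. exact: val_inj. Qed.

Definition joinF (f g : map_to Y) : FLMod L :=
  @Build_FLMod L ((projT1 f) * (projT1 g))%type (fl_prod (fl_finite _) (fl_finite _)).

Lemma join_lin (f g : map_to Y) :
  linear (fun z : (projT1 f * projT1 g)%type => projT2 f z.1 + projT2 g z.2).
Proof. by move=> a u v /=; rewrite !linearP scalerDr addrACA. Qed.

Definition join (f g : map_to Y) : map_to Y :=
  existT _ (joinF f g) (mk_lin (@join_lin f g)).

Definition meetF (f g : map_to Y) : FLMod L :=
  @Build_FLMod L (pbT (projT2 f) (projT2 g))
    (fl_inj (g := mk_lin (@val_linear f g)) (@val_inj' f g) (fl_prod (fl_finite _) (fl_finite _))).

Lemma meet_lin (f g : map_to Y) :
  linear (fun s : pbT (projT2 f) (projT2 g) => projT2 f (val s).1).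
Proof. by move=> a u v /=; rewrite !linearP. Qed.

Definition meet (f g : map_to Y) : map_to Y :=
  existT _ (meetF f g) (mk_lin (@meet_lin f g)).


Lemma le_refl (f : map_to Y) : map_le f f.
Proof. by exists (mk_lin (f := id) (fun a u v => erefl)). Qed.

Lemma le_trans (f g h : map_to Y) : map_le f g -> map_le g h -> map_le f h.
Proof.
move=> [h1 e1] [h2 e2].
have lin : linear (fun x => h2 (h1 x)) by move=> a u v; rewrite !linearP.
by exists (mk_lin lin) => x; rewrite e1 e2.
Qed.

Lemma join_l (f g : map_to Y) : map_le f (join f g).
Proof.
have lin : linear (fun x : projT1 f => (x, 0 : projT1 g) : (projT1 f * projT1 g)%type).
  by move=> a u v; congr pair; rewrite /= scaler0 addr0.
by exists (mk_lin lin) => x /=; rewrite linear0 addr0.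
Qed.

Lemma join_r (f g : map_to Y) : map_le g (join f g).
Proof.
have lin : linear (fun x : projT1 g => (0 : projT1 f, x) : (projT1 f * projT1 g)%type).
  by move=> a u v; congr pair; rewrite /= scaler0 addr0.
by exists (mk_lin lin) => x /=; rewrite linear0 add0r.
Qed.

Lemma join_min (f g z : map_to Y) : map_le f z -> map_le g z -> map_le (join f g) z.
Proof.
move=> [h1 e1] [h2 e2].
have lin : linear (fun x : (projT1 f * projT1 g)%type => h1 x.1 + h2 x.2).
  by move=> a u v /=; rewrite !linearP scalerDr addrACA.
by exists (mk_lin lin) => x /=; rewrite linearD e1 e2.
Qed.

Lemma meet_eq (f g : map_to Y) (s : pbT (projT2 f) (projT2 g)) :
  projT2 f (val s).1 = projT2 g (val s).2.
Proof. exact: (eqP (valP s)). Qed.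

Lemma meet_l (f g : map_to Y) : map_le (meet f g) f.
Proof.
have lin : linear (fun s : pbT (projT2 f) (projT2 g) => (val s).1).
  by [].
by exists (mk_lin lin).
Qed.

Lemma meet_r (f g : map_to Y) : map_le (meet f g) g.
Proof.
have lin : linear (fun s : pbT (projT2 f) (projT2 g) => (val s).2).
  by [].
by exists (mk_lin lin) => x /=; exact: meet_eq.
Qed.

Lemma meet_max (f g z : map_to Y) : map_le z f -> map_le z g -> map_le z (meet f g).
Proof.
move=> [h1 e1] [h2 e2].
have P x : (h1 x, h2 x) \in pbpred (projT2 f) (projT2 g).
  by apply/eqP; rewrite /= -e1 -e2.
pose F x : pbT (projT2 f) (projT2 g) := Sub (h1 x, h2 x) (P x).
have lin : linear F.
  move=> a u v; apply: val_inj; rewrite /F /= !linearP.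
  by [].
by exists (mk_lin lin).
Qed.


Lemma mod_step (a b c : map_to Y) :
  map_le a c -> map_le (meet (join a b) c) (join a (meet b c)).
Proof.
move=> [h e].
have P (q : pbT (projT2 (join a b)) (projT2 c)) :
    ((val q).1.2, (val q).2 - h (val q).1.1) \in pbpred (projT2 b) (projT2 c).
  apply/eqP; rewrite /= linearB -e -(meet_eq q) /=.
  by rewrite addrAC subrr add0r.
pose F q : (projT1 a * pbT (projT2 b) (projT2 c))%type := ((val q).1.1, (Sub ((val q).1.2, (val q).2 - h (val q).1.1) (P q) : pbT (projT2 b) (projT2 c))).
have lin : linear F.
  move=> r u v; rewrite /F; congr pair; apply: val_inj; rewrite /=; congr pair.
  by rewrite (linearP h) /= scalerBr opprD addrACA.
by exists (mk_lin lin).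
Qed.

End Constr.

Theorem proposition2p3 (k : comNzRingType) (L : nzRingType)
  (phi : {rmorphism k -> L}) (hL : artin_algebra phi)
  (Y : lmodType L) (hY : finite_length Y) :
  modular_lattice_classes (@map_le L Y).
Proof.
split.
- move=> a b; exists (join a b); split; [exact: join_l | exact: join_r | exact: join_min].
- move=> a b; exists (meet a b); split; [exact: meet_l | exact: meet_r | exact: meet_max].
- move=> a b c j m m' j' hac [ja jb jmin] [mj mc mmin] [m'b m'c m'min] [aj' m'j' j'min].
  have jJ := jmin _ (join_l a b) (join_r a b).
  have mQ := meet_max (le_trans mj jJ) mc.
  have QP := mod_step b hac.
  have Pm' := m'min _ (meet_l b c) (meet_r b c).
  have Pj' := join_min aj' (le_trans Pm' m'j').
  exact: le_trans mQ (le_trans QP Pj').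
Qed.
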